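(* Let $x$ be a real number with $0<x\le 1$. For every integer $k\ge 1$, $$B_{k}(1-x)=(-1)^{k+1}\sum_{n=1}^{k}\left(\frac{1}{n(n+1)}+\frac{x-1}{n^2}\right)\Delta_{n,x}(k),\qquad\text{where}\quad \Delta_{n,x}(k)=\sum_{j=1}^{n}(-1)^{j}\binom{n}{j}\,j\,(j+x-1)^{k-1}.$$
   Context: The Bernoulli polynomials $B_k(x)$ are defined by the generating function $\frac{te^{xt}}{e^{t}-1}=\sum_{k=0}^{\infty}\frac{B_k(x)}{k!}t^k$ for $|t|<2\pi$. Here $0^0$ is interpreted as $1$. *)

(* Defs.v *)
From Stdlib Require Import Reals Lra.
From Coquelicot Require Import Coquelicot.
Open Scope R_scope.

Definition bern_gen (x t : R) : R :=
  if Req_EM_T t 0 then 1 else t * exp (x * t) / (exp t - 1).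

(* B_k(x) = k! [t^k] (t e^{xt}/(e^t-1)) = k-th derivative at t = 0 of the
   generating function (the Taylor coefficient times k!). *)
Definition bernoulli_poly (k : nat) (x : R) : R :=
  Derive_n (bern_gen x) k 0.

Definition bern_Delta (n : nat) (x : R) (k : nat) : R :=
  sum_n_m (fun j => (-1) ^ j * Binomial.C n j * INR j * (INR j + x - 1) ^ (k - 1)) 1 n.

(* Main.v *)
Require Import Defs.
From Stdlib Require Import Reals.
From Coquelicot Require Import Coquelicot.
From Stdlib Require Import Lra Lia FunctionalExtensionality.
Open Scope R_scope.

Fixpoint Cn (n : nat) (f : R -> R) : Prop :=
  match n with
  | O => True
  | S m => (forall x, ex_derive f x) /\ Cn m (Derive f)
  end.

Definition smooth (f : R -> R) := forall n, Cn n f.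

Lemma smooth_ex f : smooth f -> forall x, ex_derive f x.
Proof. intros H x. exact (proj1 (H 1%nat) x). Qed.

Lemma smooth_D f : smooth f -> smooth (Derive f).
Proof. intros H n. exact (proj2 (H (S n))). Qed.

Lemma smooth_intro f : (forall x, ex_derive f x) -> smooth (Derive f) -> smooth f.
Proof. intros H1 H2 [|n]; simpl; auto. Qed.

Lemma Cn_mono n f : Cn (S n) f -> Cn n f.
Proof.
  revert f; induction n as [|n IH]; intros f H; simpl in *; auto.
  destruct H as [H1 [H2 H3]]. split; auto.
Qed.

Lemma smooth_const c : smooth (fun _ => c).
Proof.
  intro n; revert c; induction n; intros c; simpl; auto. split.
  - intros; apply ex_derive_const.
  - replace (Derive (fun _ => c)) with (fun _ : R => 0); auto.
    apply functional_extensionality; intros; now rewrite Derive_const.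
Qed.

Lemma Cn_plus n : forall f g, Cn n f -> Cn n g -> Cn n (fun x => f x + g x).
Proof.
  induction n as [|n IH]; intros f g Hf Hg; simpl in *; auto.
  destruct Hf as [Hf1 Hf2]; destruct Hg as [Hg1 Hg2]. split.
  - intros; apply (ex_derive_plus f g); auto.
  - replace (Derive (fun x => f x + g x)) with (fun x => Derive f x + Derive g x); auto.
    apply functional_extensionality; intros; now rewrite Derive_plus.
Qed.

Lemma Cn_mult n : forall f g, Cn n f -> Cn n g -> Cn n (fun x => f x * g x).
Proof.
  induction n as [|n IH]; intros f g Hf Hg; simpl; auto.
  pose proof (Cn_mono _ _ Hf) as Hf'. pose proof (Cn_mono _ _ Hg) as Hg'.
  destruct Hf as [Hf1 Hf2]; destruct Hg as [Hg1 Hg2]. split.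
  - intros; apply ex_derive_mult; auto.
  - replace (Derive (fun x => f x * g x)) with (fun x => Derive f x * g x + f x * Derive g x).
    + apply Cn_plus; apply IH; auto.
    + apply functional_extensionality; intros; now rewrite Derive_mult.
Qed.

Lemma smooth_plus f g : smooth f -> smooth g -> smooth (fun x => f x + g x).
Proof. intros; intro n; apply Cn_plus; auto. Qed.
Lemma smooth_mult f g : smooth f -> smooth g -> smooth (fun x => f x * g x).
Proof. intros; intro n; apply Cn_mult; auto. Qed.
Lemma smooth_scal c f : smooth f -> smooth (fun x => c * f x).
Proof. intros; apply smooth_mult; auto; apply smooth_const. Qed.
Lemma smooth_opp f : smooth f -> smooth (fun x => - f x).
Proof.
  intros H. replace (fun x => - f x) with (fun x => (-1) * f x).
  apply smooth_scal; auto. apply functional_extensionality; intros; ring.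
Qed.
Lemma smooth_minus f g : smooth f -> smooth g -> smooth (fun x => f x - g x).
Proof. intros; apply smooth_plus; auto; apply smooth_opp; auto. Qed.

Lemma smooth_id : smooth (fun x => x).
Proof.
  apply smooth_intro. intros; apply ex_derive_id.
  replace (Derive (fun x => x)) with (fun _ : R => 1). apply smooth_const.
  apply functional_extensionality; intros; now rewrite Derive_id.
Qed.

Lemma smooth_exp c : smooth (fun x => exp (c * x)).
Proof.
  intro n; revert c; induction n as [|n IH]; intros c; simpl; auto.
  assert (D : forall x, is_derive (fun x => exp (c * x)) x (c * exp (c * x))).
  { intros x. auto_derive; auto; ring. }
  split.
  - intros x; eexists; apply D.
  - replace (Derive (fun x => exp (c * x))) with (fun x => c * exp (c * x)).
    + apply (Cn_mult n (fun _ => c)). apply smooth_const. apply IH.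
    + apply functional_extensionality; intros x; symmetry; apply is_derive_unique, D.
Qed.

Lemma smooth_inv f : smooth f -> (forall x, f x <> 0) -> smooth (fun x => / f x).
Proof.
  intros Hf Hnz n. induction n as [|n IH]; simpl; auto.
  split.
  - intros x; apply ex_derive_inv; auto. apply smooth_ex; auto.
  - replace (Derive (fun x => / f x)) with (fun x => (- Derive f x) * ((/ f x) * (/ f x))).
    + apply Cn_mult. apply smooth_opp, smooth_D; auto. apply Cn_mult; exact IH.
    + apply functional_extensionality; intros x. rewrite Derive_inv; auto.
      2: apply smooth_ex; auto. field. auto.
Qed.

Lemma smooth_pow f m : smooth f -> smooth (fun x => f x ^ m).
Proof.
  intros Hf; induction m as [|m IH]; simpl.
  - apply smooth_const.
  - apply smooth_mult; auto.
Qed.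

Lemma smooth_sum (F : nat -> R -> R) m :
  (forall i, smooth (F i)) -> smooth (fun x => sum_f_R0 (fun i => F i x) m).
Proof.
  intros H; induction m as [|m IH]; simpl; auto.
  apply smooth_plus; auto.
Qed.

Lemma smooth_PSeries a : CV_radius a = p_infty -> smooth (PSeries a).
Proof.
  intros Ha n; revert a Ha; induction n as [|n IH]; intros a Ha; simpl; auto.
  split.
  - intros x; apply ex_derive_PSeries. rewrite Ha; simpl; auto.
  - replace (Derive (PSeries a)) with (PSeries (PS_derive a)).
    + apply IH. rewrite CV_radius_derive; auto.
    + apply functional_extensionality; intros x. rewrite Derive_PSeries; auto.
      rewrite Ha; simpl; auto.
Qed.

Lemma Derive_n_S_inner f n x : Derive_n f (S n) x = Derive_n (Derive f) n x.
Proof.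
  revert x; induction n as [|n IH]; intros x; simpl; auto.
  apply Derive_ext. intros t. rewrite <- IH. reflexivity.
Qed.

Lemma smooth_Derive_n f n : smooth f -> smooth (Derive_n f n).
Proof.
  revert f; induction n as [|n IH]; intros f Hf; simpl.
  - replace (fun x => f x) with f; auto.
  - replace (fun x => Derive (Derive_n f n) x) with (Derive_n (Derive f) n).
    apply IH, smooth_D; auto.
    apply functional_extensionality; intros x. rewrite <- Derive_n_S_inner. reflexivity.
Qed.

Lemma Derive_n_plus' n : forall f g x, smooth f -> smooth g ->
  Derive_n (fun t => f t + g t) n x = Derive_n f n x + Derive_n g n x.
Proof.
  induction n as [|n IH]; intros f g x Hf Hg; [reflexivity|].
  rewrite !Derive_n_S_inner.
  replace (Derive (fun t => f t + g t)) with (fun t => Derive f t + Derive g t).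
  - rewrite IH; auto; apply smooth_D; auto.
  - apply functional_extensionality; intros t; rewrite Derive_plus; auto; apply smooth_ex; auto.
Qed.

Lemma Derive_n_scal' n : forall c f x, Derive_n (fun t => c * f t) n x = c * Derive_n f n x.
Proof. intros; apply Derive_n_scal_l. Qed.

Lemma Derive_n_exp n : forall c x, Derive_n (fun t => exp (c * t)) n x = c ^ n * exp (c * x).
Proof.
  induction n as [|n IH]; intros c x; [simpl; ring|].
  rewrite Derive_n_S_inner.
  replace (Derive (fun t => exp (c * t))) with (fun t => c * exp (c * t)).
  - rewrite Derive_n_scal', IH. simpl; ring.
  - apply functional_extensionality; intros t. symmetry. apply is_derive_unique. auto_derive; auto; ring.
Qed.

Lemma Derive_n_sum n (F : nat -> R -> R) m x : (forall i, smooth (F i)) ->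
  Derive_n (fun t => sum_f_R0 (fun i => F i t) m) n x = sum_f_R0 (fun i => Derive_n (F i) n x) m.
Proof.
  intros H; induction m as [|m IH]; simpl.
  - reflexivity.
  - rewrite Derive_n_plus'; auto. rewrite IH; auto. apply smooth_sum; auto.
Qed.

Definition Zv N f := forall j, (j < N)%nat -> Derive_n f j 0 = 0.

Lemma Zv_S N f : f 0 = 0 -> Zv N (Derive f) -> Zv (S N) f.
Proof.
  intros H0 H j Hj. destruct j as [|j]. simpl; auto.
  rewrite Derive_n_S_inner. apply H. lia.
Qed.

Lemma Zv_S_inv N f : Zv (S N) f -> f 0 = 0 /\ Zv N (Derive f).
Proof.
  intros H. split. apply (H 0%nat); lia.
  intros j Hj. rewrite <- Derive_n_S_inner. apply H; lia.
Qed.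

Lemma Zv_mono N f : Zv (S N) f -> Zv N f.
Proof. intros H j Hj; apply H; lia. Qed.

Lemma Zv_plus N f g : smooth f -> smooth g -> Zv N f -> Zv N g -> Zv N (fun t => f t + g t).
Proof. intros Hf Hg H1 H2 j Hj. rewrite Derive_n_plus'; auto. rewrite H1, H2; auto; ring. Qed.

Lemma Zv_mult N : forall f g, smooth f -> smooth g -> Zv N f -> Zv N (fun t => f t * g t).
Proof.
  induction N as [|N IH]; intros f g Hf Hg H.
  - intros j Hj; lia.
  - destruct (Zv_S_inv _ _ H) as [H0 H1]. apply Zv_S.
    + rewrite H0; ring.
    + replace (Derive (fun t => f t * g t)) with (fun t => Derive f t * g t + f t * Derive g t).
      * apply Zv_plus. apply smooth_mult; auto; apply smooth_D; auto.
        apply smooth_mult; auto; apply smooth_D; auto.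
        apply IH; auto. apply smooth_D; auto.
        apply IH; auto. apply smooth_D; auto. apply Zv_mono; auto.
      * apply functional_extensionality; intros t; rewrite Derive_mult; auto; apply smooth_ex; auto.
Qed.

Lemma Zv_mult_l N f g : smooth f -> smooth g -> Zv N g -> Zv N (fun t => f t * g t).
Proof.
  intros Hf Hg H. replace (fun t => f t * g t) with (fun t => g t * f t).
  apply Zv_mult; auto. apply functional_extensionality; intros; ring.
Qed.

Lemma Zv_pow N v : smooth v -> v 0 = 0 -> Zv N (fun t => v t ^ N).
Proof.
  intros Hv H0. induction N as [|N IH].
  - intros j Hj; lia.
  - apply Zv_S. simpl. rewrite H0; ring.
    replace (Derive (fun t => v t ^ S N)) with (fun t => (INR (S N) * Derive v t) * v t ^ N).
    + apply Zv_mult_l; auto. apply smooth_scal, smooth_D; auto. apply smooth_pow; auto.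
    + apply functional_extensionality; intros t; rewrite Derive_pow; auto. apply smooth_ex; auto.
Qed.

Lemma Derive_id' x : Derive (fun y => y) x = 1.
Proof. apply is_derive_unique. auto_derive; auto. Qed.

Lemma Derive_n_t f m x : smooth f ->
  Derive_n (fun t => t * f t) (S m) x = INR (S m) * Derive_n f m x + x * Derive_n f (S m) x.
Proof.
  intros Hf. revert x. induction m as [|m IH]; intros x.
  - simpl. rewrite Derive_mult; [|apply ex_derive_id|apply smooth_ex; auto].
    rewrite Derive_id'. change (Derive (fun x0 => f x0) x) with (Derive f x). ring.
  - change (Derive_n (fun t => t * f t) (S (S m)) x) with (Derive (Derive_n (fun t => t * f t) (S m)) x).
    rewrite (Derive_ext _ _ _ IH).
    assert (E1: forall y, ex_derive (Derive_n f m) y) by (apply smooth_ex, smooth_Derive_n; auto).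
    assert (E2: forall y, ex_derive (Derive_n f (S m)) y) by (apply smooth_ex, smooth_Derive_n; auto).
    rewrite Derive_plus.
    2: apply ex_derive_scal; auto.
    2: apply ex_derive_mult; auto; apply ex_derive_id.
    rewrite Derive_scal, Derive_mult; auto. 2: apply ex_derive_id.
    rewrite Derive_id'.
    change (Derive (Derive_n f m) x) with (Derive_n f (S m) x).
    change (Derive (Derive_n f (S m)) x) with (Derive_n f (S (S m)) x).
    rewrite !S_INR. ring.
Qed.

Lemma Zv_t N f : smooth f -> Zv (S N) (fun t => t * f t) -> Zv N f.
Proof.
  intros Hf H j Hj. assert (H1 := H (S j) ltac:(lia)). rewrite Derive_n_t in H1; auto.
  rewrite Rmult_0_l, Rplus_0_r in H1. apply Rmult_integral in H1. destruct H1 as [H1|H1]; auto.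
  exfalso. apply (not_0_INR (S j)); auto.
Qed.


Definition ea := fun n => / INR (Factorial.fact n).
Definition ha := PS_decr_1 ea.
Definition h := PSeries ha.

Lemma CV_ea : CV_radius ea = p_infty.
Proof.
  apply CV_radius_infinite_DAlembert.
  - intros n; unfold ea. apply Rinv_neq_0_compat, INR_fact_neq_0.
  - apply is_lim_seq_ext with (fun n => / INR (S n)).
    + intros n; unfold ea. change (Factorial.fact (S n)) with (S n * Factorial.fact n)%nat. rewrite mult_INR.
      assert (A := INR_fact_neq_0 n). assert (B : INR (S n) <> 0) by apply not_0_INR, Nat.neq_succ_0.
      rewrite Rabs_pos_eq. field; auto.
      replace (/ (INR (S n) * INR (Factorial.fact n)) / / INR (Factorial.fact n)) with (/ INR (S n)) by (field; auto).
      left; apply Rinv_0_lt_compat, lt_0_INR; lia.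
    + replace (Finite 0) with (Rbar_inv p_infty) by reflexivity.
      apply is_lim_seq_inv. 2: discriminate.
      apply (is_lim_seq_incr_1 INR p_infty). apply is_lim_seq_INR.
Qed.

Lemma CV_ha : CV_radius ha = p_infty.
Proof. unfold ha; rewrite CV_radius_decr_1; apply CV_ea. Qed.

Lemma smooth_h : smooth h.
Proof. apply smooth_PSeries, CV_ha. Qed.

Lemma exp_h t : exp t = 1 + t * h t.
Proof.
  rewrite exp_Reals. fold ea. rewrite PSeries_decr_1.
  - unfold ea at 1; simpl. unfold h, ha. field.
  - apply CV_radius_inside. rewrite CV_ea; simpl; auto.
Qed.

Lemma h0 : h 0 = 1.
Proof. unfold h. rewrite PSeries_0. unfold ha, PS_decr_1, ea. simpl. field. Qed.

Lemma h_pos t : 0 < h t.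
Proof.
  destruct (Req_dec t 0) as [->|Ht]. rewrite h0; lra.
  assert (E := exp_h t).
  destruct (Rlt_or_le 0 t) as [Hp|Hn].
  - assert (1 + t < exp t) by (apply exp_ineq1; auto). nra.
  - assert (exp t < exp 0) by (apply exp_increasing; lra). rewrite exp_0 in H. nra.
Qed.


Definition v t := 1 - exp ((-1) * t).
Definition q t := exp ((-1) * t) * h t.
Definition ee x t := exp ((- x) * t).
Definition Sk k t := sum_f_R0 (fun n => v t ^ n / INR (S n)) k.
Definition Rk k t := t - v t * Sk k t.

Lemma smooth_v : smooth v.
Proof. apply smooth_minus. apply smooth_const. apply smooth_exp. Qed.
Lemma smooth_q : smooth q.
Proof. apply smooth_mult. apply smooth_exp. apply smooth_h. Qed.
Lemma smooth_ee x : smooth (ee x).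
Proof. apply smooth_exp. Qed.
Lemma smooth_Sk k : smooth (Sk k).
Proof.
  unfold Sk. apply (smooth_sum (fun n t => v t ^ n / INR (S n))). intros i.
  apply (smooth_mult (fun t => v t ^ i) (fun _ => / INR (S i))). apply smooth_pow, smooth_v. apply smooth_const.
Qed.
Lemma smooth_Rk k : smooth (Rk k).
Proof. apply smooth_minus. apply smooth_id. apply smooth_mult. apply smooth_v. apply smooth_Sk. Qed.

Lemma v0 : v 0 = 0.
Proof. unfold v. rewrite Rmult_0_r, exp_0. ring. Qed.

Lemma v_tq t : v t = t * q t.
Proof.
  unfold v, q. assert (E := exp_h t).
  assert (E2 : exp ((-1) * t) * exp t = 1) by (rewrite <- exp_plus; replace (-1 * t + t) with 0 by ring; apply exp_0).
  replace (1 - exp ((-1) * t)) with (exp ((-1) * t) * exp t - exp ((-1) * t)) by (rewrite E2; ring).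
  rewrite E. ring.
Qed.

Lemma q_nz t : q t <> 0.
Proof. unfold q. apply Rgt_not_eq. apply Rmult_lt_0_compat. apply exp_pos. apply h_pos. Qed.

Lemma G_eq x : bern_gen (1 - x) = fun t => exp ((1 - x) * t) * / h t.
Proof.
  apply functional_extensionality; intros t. unfold bern_gen.
  destruct (Req_EM_T t 0) as [->|Ht].
  - rewrite h0, Rmult_0_r, exp_0. field.
  - rewrite (exp_h t). assert (Hh := h_pos t). replace (1 + t * h t - 1) with (t * h t) by ring.
    field. split; lra.
Qed.

Lemma smooth_G x : smooth (bern_gen (1 - x)).
Proof.
  rewrite G_eq. apply smooth_mult. apply smooth_exp. apply smooth_inv. apply smooth_h.
  intros t; assert (Hh := h_pos t); lra.
Qed.

Lemma Gv x t : bern_gen (1 - x) t * v t = t * ee x t.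
Proof.
  rewrite G_eq. rewrite v_tq. unfold q, ee. assert (Hh := h_pos t).
  replace (exp (- x * t)) with (exp ((1 - x) * t) * exp ((-1) * t)).
  field. lra. rewrite <- exp_plus. f_equal; ring.
Qed.

Lemma Rk_S k (s : R) : Rk k s - v s ^ (S (S k)) / INR (S (S k)) = Rk (S k) s.
Proof. unfold Rk, Sk. rewrite tech5. rewrite <- tech_pow_Rmult. field. apply not_0_INR; lia. Qed.

Lemma Rk_derive k t : is_derive (Rk k) t (v t ^ (S k)).
Proof.
  induction k as [|k IH].
  - unfold Rk, Sk, v. simpl. auto_derive; auto. field.
  - apply is_derive_ext with (fun t => Rk k t - v t ^ (S (S k)) / INR (S (S k))).
    + intros s. apply Rk_S.
    + assert (D2 : is_derive (fun t => v t ^ (S (S k)) / INR (S (S k))) t (v t ^ S k * (1 - v t))).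
      { unfold v. auto_derive; auto.
        replace (match k with 0%nat => 1 | S _ => INR k + 1 end) with (INR (S k)) by (destruct k; reflexivity).
        simpl pow. unfold Rminus. field. assert (0 <= INR (S k)) by apply pos_INR. lra. }
      replace (v t ^ S (S k)) with (v t ^ S k - v t ^ S k * (1 - v t)) by (simpl; ring).
      apply (is_derive_minus (Rk k) (fun t => v t ^ (S (S k)) / INR (S (S k)))); auto.
Qed.


Lemma Derive_Rk k : Derive (Rk k) = fun t => v t ^ S k.
Proof. apply functional_extensionality; intros t. apply is_derive_unique, Rk_derive. Qed.

Lemma Zv_Rk k : Zv (S (S k)) (Rk k).
Proof.
  apply Zv_S. unfold Rk. rewrite v0. ring.
  rewrite Derive_Rk. apply Zv_pow. apply smooth_v. apply v0.
Qed.

Definition Ek x k t := bern_gen (1 - x) t - ee x t * Sk k t.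

Lemma smooth_Ek x k : smooth (Ek x k).
Proof. apply smooth_minus. apply smooth_G. apply smooth_mult. apply smooth_ee. apply smooth_Sk. Qed.

Lemma Zv_Ek x k : Zv (S k) (Ek x k).
Proof.
  assert (H1 : Zv (S (S k)) (fun t => t * (Ek x k t * q t))).
  { replace (fun t => t * (Ek x k t * q t)) with (fun t => ee x t * Rk k t).
    apply Zv_mult_l. apply smooth_ee. apply smooth_Rk. apply Zv_Rk.
    apply functional_extensionality; intros t.
    replace (t * (Ek x k t * q t)) with (Ek x k t * (t * q t)) by ring. rewrite <- v_tq.
    unfold Ek, Rk. replace ((bern_gen (1 - x) t - ee x t * Sk k t) * v t)
      with (bern_gen (1 - x) t * v t - ee x t * Sk k t * v t) by ring.
    rewrite Gv. ring. }
  apply Zv_t in H1. 2: apply smooth_mult; [apply smooth_Ek|apply smooth_q].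
  replace (Ek x k) with (fun t => (Ek x k t * q t) * / q t).
  apply Zv_mult; auto. apply smooth_mult; [apply smooth_Ek|apply smooth_q].
  apply smooth_inv. apply smooth_q. apply q_nz.
  apply functional_extensionality; intros t. field. apply q_nz.
Qed.

Lemma bern_reduce x k : bernoulli_poly k (1 - x) = Derive_n (fun t => ee x t * Sk k t) k 0.
Proof.
  unfold bernoulli_poly.
  replace (bern_gen (1 - x)) with (fun t => Ek x k t + ee x t * Sk k t).
  rewrite Derive_n_plus'. rewrite (Zv_Ek x k k); [ring| lia].
  apply smooth_Ek. apply smooth_mult. apply smooth_ee. apply smooth_Sk.
  apply functional_extensionality; intros t. unfold Ek. ring.
Qed.


Lemma is_derive_eq (f : R -> R) x l l' : is_derive f x l -> l = l' -> is_derive f x l'.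
Proof. intros H ->; exact H. Qed.

Definition cc x n := 1 / (INR (S n) * INR (S (S n))) - x / INR (S n).
Definition dd x k := - (x + INR k) / INR (S k).
Fixpoint Tsum x k t := match k with O => 0 | S m => Tsum x m t + cc x m * v t ^ m end.

Lemma D_ee x t : is_derive (ee x) t (- x * ee x t).
Proof. unfold ee. auto_derive; auto. ring. Qed.
Lemma D_v t : is_derive v t (1 - v t).
Proof. unfold v. auto_derive; auto. ring. Qed.

Lemma D_alg x k (T e w p : R) :
  e * (T + dd x k * p) + (- x * e * (/ INR (S (S k)) * (w * p)) + e * (/ INR (S (S k)) * (INR (S k) * (1 - w) * p)))
  = e * (T + cc x k * p + dd x (S k) * (w * p)).
Proof.
  unfold cc, dd. rewrite !S_INR. assert (0 <= INR k) by apply pos_INR. field. lra.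
Qed.

Lemma Sk0 x (s : R) : ee x s = ee x s * Sk 0 s.
Proof. unfold Sk. simpl. field. Qed.
Lemma SkS x k (s : R) : ee x s * Sk k s + ee x s * (/ INR (S (S k)) * v s ^ S k) = ee x s * Sk (S k) s.
Proof. unfold Sk. rewrite tech5. field. apply not_0_INR; lia. Qed.

Lemma D_eeS x k t : is_derive (fun t => ee x t * Sk k t) t (ee x t * (Tsum x k t + dd x k * v t ^ k)).
Proof.
  induction k as [|k IH].
  - apply is_derive_ext with (fun t => ee x t).
    { intros s. apply Sk0. }
    eapply is_derive_eq. apply D_ee. unfold dd. simpl. field.
  - apply is_derive_ext with (fun t => ee x t * Sk k t + ee x t * (/ INR (S (S k)) * v t ^ S k)).
    { intros s. apply SkS. }
    eapply is_derive_eq.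
    apply (is_derive_plus (fun t => ee x t * Sk k t) (fun t => ee x t * (/ INR (S (S k)) * v t ^ S k))).
    apply IH.
    apply (is_derive_mult (ee x) (fun t => / INR (S (S k)) * v t ^ S k)).
    apply D_ee. apply is_derive_scal. apply is_derive_pow. apply D_v.
    intros; apply Rmult_comm.
    simpl Tsum. simpl pred. change (v t ^ S k) with (v t * v t ^ k).
    unfold plus, mult; simpl. apply D_alg.
Qed.


Lemma exp_pow_aux (a : R) i : exp a ^ i = exp (INR i * a).
Proof.
  induction i as [|i IH]. simpl. rewrite Rmult_0_l, exp_0; auto.
  rewrite S_INR. simpl pow. rewrite IH. rewrite <- exp_plus. f_equal; ring.
Qed.

Lemma eev_expand x n t : ee x t * v t ^ n =
  sum_f_R0 (fun i => Binomial.C n i * (-1) ^ i * exp ((- (x + INR i)) * t)) n.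
Proof.
  unfold v. replace (1 - exp (-1 * t)) with (- exp (-1 * t) + 1) by ring.
  rewrite binomial. rewrite scal_sum. apply sum_eq. intros i Hi.
  rewrite pow1. unfold ee. replace (- exp (-1 * t)) with ((-1) * exp (-1 * t)) by ring.
  rewrite Rpow_mult_distr. rewrite exp_pow_aux.
  replace (exp (- (x + INR i) * t)) with (exp (INR i * (-1 * t)) * exp (- x * t)).
  ring. rewrite <- exp_plus. f_equal; ring.
Qed.

Lemma Dn_eev x n m : Derive_n (fun t => ee x t * v t ^ n) m 0 =
  sum_f_R0 (fun i => Binomial.C n i * (-1) ^ i * (- (x + INR i)) ^ m) n.
Proof.
  replace (fun t => ee x t * v t ^ n) with
    (fun t => sum_f_R0 (fun i => (Binomial.C n i * (-1) ^ i) * exp ((- (x + INR i)) * t)) n).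
  2: { apply functional_extensionality; intros t. rewrite eev_expand. reflexivity. }
  rewrite (Derive_n_sum m (fun i t => (Binomial.C n i * (-1) ^ i) * exp ((- (x + INR i)) * t))).
  2: { intros i. apply smooth_scal, smooth_exp. }
  apply sum_eq; intros i Hi. rewrite Derive_n_scal', Derive_n_exp. rewrite Rmult_0_r, exp_0. ring.
Qed.


Lemma Tsum_sum x k t : Tsum x (S k) t = sum_f_R0 (fun n => cc x n * v t ^ n) k.
Proof.
  induction k as [|k IH]. simpl; ring.
  change (Tsum x (S (S k)) t) with (Tsum x (S k) t + cc x (S k) * v t ^ (S k)).
  rewrite IH, tech5. reflexivity.
Qed.

Lemma fun_rewrite x m t : ee x t * (Tsum x (S m) t + dd x (S m) * v t ^ S m) =
  sum_f_R0 (fun n => cc x n * (ee x t * v t ^ n)) m + dd x (S m) * (ee x t * v t ^ S m).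
Proof.
  rewrite Tsum_sum, Rmult_plus_distr_l, scal_sum.
  f_equal. apply sum_eq; intros; ring. ring.
Qed.

Lemma bern_sum x m : bernoulli_poly (S m) (1 - x) =
  sum_f_R0 (fun n => cc x n * sum_f_R0 (fun i => Binomial.C n i * (-1) ^ i * (- (x + INR i)) ^ m) n) m.
Proof.
  rewrite bern_reduce, Derive_n_S_inner.
  replace (Derive (fun t => ee x t * Sk (S m) t)) with
    (fun t => sum_f_R0 (fun n => cc x n * (ee x t * v t ^ n)) m + dd x (S m) * (ee x t * v t ^ S m)).
  2: { apply functional_extensionality; intros t. rewrite <- fun_rewrite.
       symmetry. apply is_derive_unique, D_eeS. }
  assert (Sm : forall n, smooth (fun t => ee x t * v t ^ n)).
  { intros n. apply smooth_mult. apply smooth_ee. apply smooth_pow, smooth_v. }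
  rewrite Derive_n_plus'.
  2: { apply (smooth_sum (fun n t => cc x n * (ee x t * v t ^ n))). intros; apply smooth_scal; auto. }
  2: { apply smooth_scal; auto. }
  rewrite Derive_n_scal'.
  rewrite (Zv_mult_l (S m) (ee x) (fun t => v t ^ S m)); auto.
  2: apply smooth_ee. 2: apply smooth_pow, smooth_v. 2: apply Zv_pow; [apply smooth_v|apply v0].
  rewrite (Derive_n_sum m (fun n t => cc x n * (ee x t * v t ^ n))).
  2: { intros; apply smooth_scal; auto. }
  rewrite Rmult_0_r, Rplus_0_r. apply sum_eq; intros n Hn.
  rewrite Derive_n_scal', Dn_eev. reflexivity.
Qed.


Lemma sum_shift1 (F : nat -> R) n : sum_n_m F 1 (S n) = sum_f_R0 (fun i => F (S i)) n.
Proof. rewrite <- sum_n_m_S. rewrite <- sum_n_Reals. reflexivity. Qed.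

Lemma C_shift n i : (i <= n)%nat -> Binomial.C (S n) (S i) * INR (S i) = INR (S n) * Binomial.C n i.
Proof.
  intros Hi. unfold Binomial.C. replace (S n - S i)%nat with (n - i)%nat by lia.
  change (Factorial.fact (S n)) with (S n * Factorial.fact n)%nat.
  change (Factorial.fact (S i)) with (S i * Factorial.fact i)%nat.
  rewrite !mult_INR. assert (A := INR_fact_neq_0 i). assert (B := INR_fact_neq_0 (n - i)).
  assert (D : INR (S i) <> 0) by (apply not_0_INR; lia). field. auto.
Qed.

Lemma Delta_eq x n m : bern_Delta (S n) x (S m) =
  - INR (S n) * sum_f_R0 (fun i => Binomial.C n i * (-1) ^ i * (x + INR i) ^ m) n.
Proof.
  unfold bern_Delta. rewrite sum_shift1. rewrite scal_sum. apply sum_eq; intros i Hi.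
  replace (S m - 1)%nat with m by lia.
  replace (INR (S i) + x - 1) with (x + INR i) by (rewrite S_INR; ring).
  replace ((-1) ^ S i * Binomial.C (S n) (S i) * INR (S i) * (x + INR i) ^ m)
    with ((-1) ^ S i * (Binomial.C (S n) (S i) * INR (S i)) * (x + INR i) ^ m) by ring.
  rewrite C_shift; auto. simpl pow. ring.
Qed.

Lemma final_alg x n m s :
  cc x n * ((-1) ^ m * s) =
  (-1) ^ (S m + 1) * ((1 / (INR (S n) * (INR (S n) + 1)) + (x - 1) / INR (S n) ^ 2) * (- INR (S n) * s)).
Proof.
  rewrite pow_add, pow_1, <- tech_pow_Rmult. unfold cc. rewrite !S_INR.
  assert (0 <= INR n) by apply pos_INR. field. lra.
Qed.

Theorem mainTheorem3 (x : R) (hx0 : 0 < x) (hx1 : x <= 1) (k : nat) (hk : (1 <= k)%nat) :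
  bernoulli_poly k (1 - x) =
  (-1) ^ (k + 1) *
  sum_n_m (fun n => (1 / (INR n * (INR n + 1)) + (x - 1) / (INR n ^ 2)) * bern_Delta n x k) 1 k.
Proof.
  destruct k as [|m]. lia.
  rewrite bern_sum, sum_shift1, scal_sum. apply sum_eq; intros n Hn.
  rewrite Delta_eq.
  replace (sum_f_R0 (fun i => Binomial.C n i * (-1) ^ i * (- (x + INR i)) ^ m) n)
    with ((-1) ^ m * sum_f_R0 (fun i => Binomial.C n i * (-1) ^ i * (x + INR i) ^ m) n).
  - rewrite final_alg. ring.
  - rewrite scal_sum. apply sum_eq; intros i Hi.
    replace (- (x + INR i)) with ((-1) * (x + INR i)) by ring. rewrite Rpow_mult_distr. ring.
Qed.
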